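(* Let $\varphi(x)=\sum_{i\ge0}\gamma_ix^i\in\mathbb{K}[[x]]$ and let $k\ge0$ be an integer. Then $$\sum_{i=0}^m(-1)^i\binom{2m+2k-1}{m-i}\binom{m+i}{i}\gamma_{m+i-1}=0$$ for each $m\ge1$ if and only if there is a power series $\psi(y)\in\mathbb{K}[[y]]$ such that $$\sum_{i\ge0}\gamma_ix^i=\frac1x\cdot\frac{d^{2k-1}}{dx^{2k-1}}\left[\frac{x^{2k}}{1-x}\,\psi\!\left(\frac{x^2}{1-x}\right)\right],$$ where for $k=0$ the operator $\frac{d^{-1}}{dx^{-1}}$ means formal term-by-term integration with vanishing constant of integration. If $k\ge1$, this last condition is equivalent to the existence of $\rho(y)\in\mathbb{K}[[y]]$ with $$\sum_{i\ge0}\gamma_ix^i=\frac1x\cdot\frac{d^{2k-1}}{dx^{2k-1}}\left[x^{2k-2}\rho\!\left(\frac{x^2}{1-x}\right)\right].$$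
   Context: $\mathbb{K}\in\{\mathbb{Q},\mathbb{R},\mathbb{C}\}$. All operations (composition, differentiation, integration) are formal operations on formal power series. *)

(* Defs.v *)
(* Formal power series over a field K are represented by
   their coefficient sequences  nat -> K  (f n = coefficient of x^n). *)
From HB Require Import structures.
From mathcomp Require Import all_boot all_order all_algebra.
Set Implicit Arguments. Unset Strict Implicit. Unset Printing Implicit Defensive.
Import Order.TTheory GRing.Theory Num.Theory.
Local Open Scope ring_scope.

Section FPS.
Variable K : fieldType.

Definition fps := nat -> K.

Definition fps_Xn (n : nat) : fps := fun i => if i == n then 1 else 0.

Definition fps_geom : fps := fun _ => 1.

Definition fps_mul (f g : fps) : fps :=
  fun n => \sum_(i < n.+1) f i * g (n - i)%N.

Definition fps_exp (f : fps) (j : nat) : fps := iter j (fps_mul f) (fps_Xn 0).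

(* composition psi(u(x)), meaningful when u has zero constant term: the
   coefficient of x^n only involves psi_0 .. psi_n since u^j has valuation >= j *)
Definition fps_comp (psi u : fps) : fps :=
  fun n => \sum_(j < n.+1) psi j * fps_exp u j n.

(* the series x^2/(1-x) = sum_{i>=2} x^i *)
Definition fps_u : fps := fun i => if (2 <= i)%N then 1 else 0.

Definition fps_deriv (f : fps) : fps := fun n => f n.+1 *+ n.+1.

Definition fps_integ (f : fps) : fps :=
  fun n => if n is n'.+1 then f n' / n%:R else 0.

(* the operator d^{2k-1}/dx^{2k-1}; for k = 0 it is integration d^{-1}/dx^{-1} *)
Definition fps_Dodd (k : nat) (f : fps) : fps :=
  if k is k'.+1 then iter (2 * k').+1 fps_deriv f else fps_integ f.

End FPS.

(* Main.v *)
Require Import Defs.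
From HB Require Import structures.
From mathcomp Require Import all_boot all_order all_algebra.
From mathcomp Require Import zify ring.
From Stdlib Require Import FunctionalExtensionality.
Import Order.TTheory GRing.Theory Num.Theory.
Local Open Scope ring_scope.

Section P.
Variable K : numFieldType.

Lemma fact_neq0 n : (n`!)%:R != 0 :> K.
Proof. by rewrite pnatr_eq0 -lt0n fact_gt0. Qed.

Lemma sum_trunc (F : nat -> K) N M : (N <= M)%N ->
  (forall l, (N <= l)%N -> (l < M)%N -> F l = 0) ->
  \sum_(l < M) F l = \sum_(l < N) F l.
Proof.
move=> NM H; rewrite -(big_mkord xpredT F) -(big_mkord xpredT F).
rewrite (@big_cat_nat _ _ _ N 0 M) //=.
rewrite [X in _ + X = _]big_nat_cond [X in _ + X = _]big1 ?addr0 // => i /andP[/andP [h1 h2] _].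
exact: H.
Qed.

Lemma XnM d (f : fps K) n :
  fps_mul (fps_Xn K d) f n = if (d <= n)%N then f (n - d)%N else 0.
Proof.
rewrite /fps_mul /fps_Xn; case: leqP => h.
  rewrite (bigD1 (Ordinal (h : (d < n.+1)%N))) //= eqxx mul1r big1 ?addr0 //.
  move=> i hi; case: eqP => [e|_]; last by rewrite mul0r.
  by move: hi; rewrite -val_eqE /= e eqxx.
rewrite big1 // => i _; case: eqP => [e|_]; last by rewrite mul0r.
have := ltn_ord i; lia.
Qed.

Lemma mulC (f g : fps K) n : fps_mul f g n = fps_mul g f n.
Proof.
rewrite /fps_mul (reindex_inj rev_ord_inj); apply: eq_bigr => i _.
have hi := ltn_ord i.
rewrite /= subSS subKn; [exact: mulrC | lia].
Qed.

Lemma iter_deriv t (f : fps K) N :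
  iter t (@fps_deriv K) f N = f (N + t)%N *+ ((N + t) ^_ t).
Proof.
elim: t N => [|t IH] N; first by rewrite addn0 ffactn0 mulr1n.
rewrite iterS /fps_deriv IH -mulrnA ffactnSr.
have -> : (N.+1 + t = N + t.+1)%N by lia.
have -> : (N + t.+1 - t = N.+1)%N by lia.
by [].
Qed.

Definition E j n := fps_exp (fps_u K) j n.
Arguments E : simpl never.

Lemma E0 n : E 0 n = if n == 0%N then 1 else 0.
Proof. by []. Qed.

Lemma ES j n : E j.+1 n = \sum_(a < n.+1) fps_u K a * E j (n - a)%N.
Proof. by []. Qed.

Lemma E_lt j t : (t < j)%N -> E j t = 0.
Proof.
elim: j t => [//|j IH] t h; rewrite ES big1 // => a _.
case: (posnP a) => [->|ha]; first by rewrite /fps_u /= mul0r.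
have ha2 := ltn_ord a; rewrite IH ?mulr0 //; lia.
Qed.

Lemma E_01 j n : (n < 2)%N -> E j.+1 n = 0.
Proof.
move=> hn; rewrite ES big1 // => a _.
have h2 := ltn_ord a; rewrite /fps_u; case: (leqP 2 a) => h1; last by rewrite mul0r.
lia.
Qed.

Lemma E_S2 j q : E j.+1 q.+2 = \sum_(t < q.+1) E j t.
Proof.
rewrite ES 2!big_ord_recl /= /fps_u /= !mul0r !add0r.
rewrite (reindex_inj rev_ord_inj); apply: eq_bigr => i _ /=.
have := ltn_ord i => hi.
rewrite mul1r; congr E; rewrite /bump /=; lia.
Qed.

Lemma S_E j p : \sum_(t < p.+1) E j t = ('C(p - j, j))%:R.
Proof.
elim: j p => [|j IH] p.
  rewrite big_ord_recl E0 /= big1 ?addr0 ?bin0 // => i _; by rewrite E0.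
elim: p => [|p IHp]; first by rewrite big_ord1 E_01 // bin0n.
rewrite big_ord_recr /= IHp.
case: p IHp => [|q] IHq.
  by rewrite E_01 // addr0 !bin0n.
rewrite E_S2 IH.
case: (leqP j q) => h.
  have -> : (q.+2 - j.+1 = (q - j).+1)%N by lia.
  have -> : (q.+1 - j.+1 = (q - j))%N by lia.
  by rewrite binS natrD.
have -> : (q.+2 - j.+1 = 0)%N by lia.
have -> : (q.+1 - j.+1 = 0)%N by lia.
have -> : (q - j = 0)%N by lia.
rewrite !bin0n; case: j h {IH IHq} => [//|j] _; by rewrite addr0.
Qed.

Lemma binE n r : (r <= n)%N ->
  ('C(n, r))%:R = (n`!)%:R / ((r`!)%:R * ((n - r)`!)%:R) :> K.
Proof.
move=> h; rewrite -(bin_fact h) !natrM mulfK // mulf_neq0 //; exact: fact_neq0.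
Qed.

Definition g (psi : fps K) (p : nat) : K :=
  \sum_(l < p.+1) psi l * ('C(p - l, l))%:R.

Definition F k (psi : fps K) :=
  fps_mul (fps_mul (fps_Xn K (2 * k)) (fps_geom K)) (fps_comp psi (fps_u K)).

Definition c k (p : nat) : K := ((p + 2 * k)`!)%:R / ((p.+1)`!)%:R.

Lemma c_neq0 k p : c k p != 0.
Proof. by rewrite /c mulf_neq0 ?invr_eq0 ?fact_neq0. Qed.

Lemma hA k : fps_mul (fps_Xn K (2 * k)) (fps_geom K) =
    fun i => if (2 * k <= i)%N then 1 else 0.
Proof. by apply: functional_extensionality => i; rewrite XnM. Qed.

Lemma Fcoef k psi p : F k psi (p + 2 * k)%N = g psi p.
Proof.
rewrite /F hA mulC /fps_mul.
rewrite (sum_trunc (fun i => fps_comp psi (fps_u K) i * (if (2 * k <= p + 2 * k - i)%N then 1 else 0)) p.+1); first last.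
- move=> l h1 h2; case: (leqP (2 * k) (p + 2 * k - l)) => h; first lia.
  by rewrite mulr0.
- lia.
transitivity (\sum_(i < p.+1) \sum_(j < p.+1) psi j * E j i).
  apply: eq_bigr => i _; have hi := ltn_ord i.
  case: (leqP (2 * k) (p + 2 * k - i)) => h; last lia.
  rewrite mulr1.
  transitivity (\sum_(j < i.+1) psi j * E j i); first by [].
  rewrite [RHS](sum_trunc (fun j => psi j * E j i) i.+1) //.
  move=> l h1 h2; rewrite E_lt ?mulr0 //.
rewrite exchange_big; apply: eq_bigr => j _.
by rewrite -mulr_sumr S_E.
Qed.

Lemma F_lt k psi n : (n < 2 * k)%N -> F k psi n = 0.
Proof.
move=> hn; rewrite /F hA /fps_mul big1 // => i _.
case: (leqP (2 * k) i) => h; last by rewrite mul0r.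
have := ltn_ord i; lia.
Qed.

Lemma Dodd_S k (f : fps K) p : fps_Dodd k f p.+1 = c k p * f (p + 2 * k)%N.
Proof.
rewrite /fps_Dodd /c; case: k => [|k'].
  rewrite /fps_integ muln0 addn0 factS natrM.
  have h1 := fact_neq0 p.
  have h2 : (p.+1)%:R != 0 :> K by rewrite pnatr_eq0.
  by field; rewrite h1 addrC natr1 h2.
rewrite iter_deriv.
have -> : (p.+1 + (2 * k').+1 = p + 2 * k'.+1)%N by lia.
set X := (p + 2 * k'.+1)%N.
have hf : ((X ^_ (2 * k').+1)%:R = (X`!)%:R / ((p.+1)`!)%:R :> K).
  rewrite -(@ffact_fact X (2 * k').+1); last by rewrite /X; lia.
  have -> : (X - (2 * k').+1 = p.+1)%N by rewrite /X; lia.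
  by rewrite natrM mulfK // fact_neq0.
by rewrite -[f X *+ _]mulr_natr hf mulrC.
Qed.

Lemma Dodd_0 k (f : fps K) : (forall n, (n < 2 * k)%N -> f n = 0) ->
  fps_Dodd k f 0 = 0.
Proof.
case: k => [//|k'] H; rewrite /fps_Dodd iter_deriv H ?mul0rn //; lia.
Qed.

Lemma Xmul1 (f : fps K) n :
  fps_mul (fps_Xn K 1) f n = if n is n'.+1 then f n' else 0.
Proof. by rewrite XnM; case: n => [//|n]; rewrite subn1. Qed.

Lemma char_gen k (gamma : nat -> K) (f : fps K) (phi : fps K) :
  fps_Dodd k f 0 = 0 ->
  (forall p, fps_Dodd k f p.+1 = c k p * g phi p) ->
  (fps_mul (fps_Xn K 1) gamma = fps_Dodd k f <->
   (forall p, gamma p = c k p * g phi p)).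
Proof.
move=> H0 HS; split => [H p | H].
  by have := congr1 (fun f => f p.+1) H => /=; rewrite Xmul1 HS.
apply: functional_extensionality => n; rewrite Xmul1.
by case: n => [|p]; rewrite ?H0 ?HS.
Qed.

Lemma char1 k (gamma : nat -> K) psi :
  fps_mul (fps_Xn K 1) gamma =
      fps_Dodd k (fps_mul (fps_mul (fps_Xn K (2 * k)) (fps_geom K))
                          (fps_comp psi (fps_u K)))
  <-> (forall p, gamma p = c k p * g psi p).
Proof.
apply: char_gen.
  apply: Dodd_0 => n; exact: F_lt.
by move=> p; rewrite Dodd_S -/(F k psi) Fcoef.
Qed.

Lemma comp2 rho p : fps_comp rho (fps_u K) p.+2 = g (fun j => rho j.+1) p.
Proof.
rewrite /fps_comp big_ord_recl.
transitivity (\sum_(i < p.+2) rho i.+1 * E i.+1 p.+2).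
  rewrite [X in X + _](_ : _ = 0) ?add0r; last by rewrite /= /fps_Xn mulr0.
  by apply: eq_bigr => i _.
transitivity (\sum_(i < p.+2) rho i.+1 * ('C(p - i, i))%:R).
  by apply: eq_bigr => i _; rewrite E_S2 S_E.
rewrite big_ord_recr /= bin_small ?mulr0 ?addr0 //; lia.
Qed.


Lemma char2 k' (gamma : nat -> K) rho :
  fps_mul (fps_Xn K 1) gamma =
      fps_Dodd k'.+1 (fps_mul (fps_Xn K (2 * k'.+1 - 2)) (fps_comp rho (fps_u K)))
  <-> (forall p, gamma p = c k'.+1 p * g (fun j => rho j.+1) p).
Proof.
apply: char_gen.
  rewrite /fps_Dodd iter_deriv XnM ifT; last lia.
  have -> : (0 + (2 * k').+1 - (2 * k'.+1 - 2) = 1)%N by lia.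
  rewrite /fps_comp !big_ord_recr big_ord0 /=.
  have -> : fps_mul (fps_u K) (fps_Xn K 0) 1 = 0 by exact: (@E_01 0 1 isT).
  by rewrite /fps_Xn /= !mulr0 !addr0 mul0rn.
move=> p; rewrite Dodd_S XnM ifT; last lia.
have -> : (p + 2 * k'.+1 - (2 * k'.+1 - 2) = p.+2)%N by lia.
by rewrite comp2.
Qed.


Definition D m (f : nat -> K) := \sum_(i < m.+1) (-1) ^+ i * ('C(m, i))%:R * f i.

Lemma PS m f : D m.+1 f = D m f - D m (fun i => f i.+1).
Proof.
have e1 : D m.+1 f = f 0%N + \sum_(i < m.+1) (-1) ^+ i.+1 * ('C(m.+1, i.+1))%:R * f i.+1.
  rewrite /D big_ord_recl; congr (_ + _); by rewrite /= expr0 bin0 !mul1r.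
have e2 : D m f = f 0%N + \sum_(i < m.+1) (-1) ^+ i.+1 * ('C(m, i.+1))%:R * f i.+1.
  rewrite /D big_ord_recl [in RHS]big_ord_recr /= (@bin_small m m.+1) // mulr0 mul0r addr0.
  congr (_ + _); by rewrite expr0 bin0 !mul1r.
rewrite e1 e2 /D -addrA; congr (_ + _); rewrite -sumrB; apply: eq_bigr => i _.
rewrite binS natrD exprS; ring.
Qed.

Lemma FD m a d : (d < m)%N -> D m (fun i => ('C(i + a, d))%:R) = 0.
Proof.
elim: m a d => [//|m IH] a d h; rewrite PS; case: d h => [|d] h.
  rewrite /D; apply/eqP; rewrite subr_eq0; apply/eqP; apply: eq_bigr => i _.
  by rewrite !bin0.
transitivity (- D m (fun i => ('C(i + a, d))%:R)); last by rewrite IH ?oppr0.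
rewrite /D -sumrB -sumrN; apply: eq_bigr => i _.
rewrite (addSn i a) binS natrD; ring.
Qed.

Definition L k m (f : nat -> K) :=
  \sum_(i < m.+1)
        (-1) ^+ i * ('C((2 * m + 2 * k - 1)%N, (m - i)%N))%:R
          * ('C((m + i)%N, i))%:R * f (m + i - 1)%N.

Lemma L_img k psi m : (1 <= m)%N -> L k m (fun p => c k p * g psi p) = 0.
Proof.
move=> hm.
transitivity ((2 * m + 2 * k - 1)`!%:R / (m`!%:R * m`!%:R) * D m (fun i => g psi (m + i - 1)%N)).
  rewrite /L /D mulr_sumr; apply: eq_bigr => i _.
  have hi : (i <= m)%N by have := ltn_ord i; lia.
  rewrite /c (@binE (2 * m + 2 * k - 1) (m - i)); last lia.
  rewrite (@binE (m + i) i); last lia.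
  rewrite (@binE m i); last lia.
  have -> : (2 * m + 2 * k - 1 - (m - i) = m + i - 1 + 2 * k)%N by lia.
  have -> : (m + i - i = m)%N by lia.
  have -> : ((m + i - 1).+1 = m + i)%N by lia.
  by field; rewrite !fact_neq0.
transitivity ((2 * m + 2 * k - 1)`!%:R / (m`!%:R * m`!%:R) * (0 : K)); last by rewrite mulr0.
congr (_ * _).
transitivity (D m (fun i => \sum_(l < 2 * m) psi l * ('C(m + i - 1 - l, l))%:R)).
  apply: eq_bigr => i _; congr (_ * _); rewrite /g.
  have hi : (i <= m)%N by have := ltn_ord i; lia.
  rewrite [RHS](sum_trunc (fun l => psi l * ('C(m + i - 1 - l, l))%:R) (m + i - 1).+1); last 2 first.
  - lia.
  - move=> l h1 h2; rewrite bin_small ?mulr0 //; lia.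
  by [].
rewrite /D; under eq_bigr do rewrite mulr_sumr.
rewrite exchange_big; apply: big1 => l _.
transitivity (psi l * D m (fun i => ('C(m + i - 1 - l, l))%:R)).
  rewrite /D mulr_sumr; apply: eq_bigr => i _; ring.
case: (ltnP l m) => hl.
  have -> : (fun i : nat => ('C(m + i - 1 - l, l))%:R : K) =
            (fun i => ('C(i + (m - 1 - l), l))%:R).
    apply: functional_extensionality => i; congr (_%:R); congr binomial; lia.
  by rewrite FD ?mulr0.
rewrite /D big1 ?mulr0 // => i _; rewrite (@bin_small (m + i - 1 - l) l) ?mulr0 //.
have := ltn_ord i; lia.
Qed.


Fixpoint Pf (t : nat -> K) (n : nat) : nat -> K :=
  if n is n'.+1 then
    fun l => if l == n' then t n' - \sum_(i < n') Pf t n' i * ('C(2 * n' - i, i))%:R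
             else Pf t n' l
  else fun _ => 0.

Definition psiOf t j := Pf t j.+1 j.

Lemma Pf_stable t n l : (l < n)%N -> Pf t n l = psiOf t l.
Proof.
elim: n => [//|n IH] h /=; case: eqP => [->|ne].
  by rewrite /psiOf /= eqxx.
apply: IH; lia.
Qed.

Lemma psiOf_eq t j : g (psiOf t) (2 * j) = t j.
Proof.
rewrite /g (sum_trunc (fun l => psiOf t l * ('C(2 * j - l, l))%:R) j.+1); first last.
- move=> l h1 h2; rewrite bin_small ?mulr0 //; lia.
- lia.
rewrite big_ord_recr /=.
have -> : (2 * j - j = j)%N by lia.
rewrite binn mulr1 [psiOf t j]/psiOf /= eqxx.
have -> : \sum_(i < j) Pf t j i * ('C(2 * j - i, i))%:R =
          \sum_(i < j) psiOf t i * ('C(2 * j - i, i))%:R.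
  by apply: eq_bigr => i _; rewrite Pf_stable.
by rewrite addrC subrK.
Qed.

Lemma cond_to_psi k (gamma : nat -> K) :
  (forall m, (1 <= m)%N -> L k m gamma = 0) ->
  exists psi, forall p, gamma p = c k p * g psi p.
Proof.
move=> H; pose t j := gamma (2 * j)%N / c k (2 * j).
exists (psiOf t).
pose h := fun p => c k p * g (psiOf t) p.
have Lh : forall m, (1 <= m)%N -> L k m (fun p => gamma p - h p) = 0.
  move=> m hm; transitivity (L k m gamma - L k m h); last first.
    by rewrite H // /h L_img // subr0.
  rewrite /L -sumrB; apply: eq_bigr => i _; ring.
suff: forall p, gamma p = h p by [].
move=> p; elim/ltn_ind: p => p IH.
move: (odd_double_half p); case ho: (odd p) => /= hp; rewrite -muln2 in hp.
  set m := (p./2).+1.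
  have := Lh m isT; rewrite /L big_ord_recr /= big1; last first.
    move=> i _; have hi := ltn_ord i.
    rewrite IH ?subrr ?mulr0 //; rewrite /m in hi *; lia.
  have e : (m + m - 1 = p)%N by rewrite /m; lia.
  rewrite e subnn bin0 add0r => /eqP; rewrite mulf_eq0 => /orP [|]; last first.
    by rewrite subr_eq0 => /eqP.
  by rewrite !mulf_eq0 expf_eq0 oppr_eq0 oner_eq0 andbF pnatr_eq0 eqn0Ngt bin_gt0 leq_addl.
have -> : p = (2 * p./2)%N by lia.
by rewrite /h psiOf_eq /t mulrC divfK // c_neq0.
Qed.

End P.

Theorem lemma4p3 (K : numFieldType) (gamma : nat -> K) (k : nat) :
  ((forall m : nat, (1 <= m)%N ->
      \sum_(i < m.+1)
        (-1) ^+ i * ('C((2 * m + 2 * k - 1)%N, (m - i)%N))%:R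
          * ('C((m + i)%N, i))%:R * gamma (m + i - 1)%N = 0)
   <->
   (exists psi : fps K,
      fps_mul (fps_Xn K 1) gamma =
      fps_Dodd k (fps_mul (fps_mul (fps_Xn K (2 * k)) (fps_geom K))
                          (fps_comp psi (fps_u K)))))
  /\
  ((1 <= k)%N ->
   ((exists psi : fps K,
      fps_mul (fps_Xn K 1) gamma =
      fps_Dodd k (fps_mul (fps_mul (fps_Xn K (2 * k)) (fps_geom K))
                          (fps_comp psi (fps_u K))))
    <->
    (exists rho : fps K,
      fps_mul (fps_Xn K 1) gamma =
      fps_Dodd k (fps_mul (fps_Xn K (2 * k - 2)) (fps_comp rho (fps_u K)))))).
Proof.
split.
  split => [H | [psi Hpsi] m hm].
    have [psi Hp] := @cond_to_psi K k gamma H.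
    by exists psi; apply: (proj2 (char1 _ _ _ _)).
  have Hp := proj1 (char1 _ _ _ _) Hpsi.
  transitivity (L _ k m (fun p => c K k p * g K psi p)); last exact: L_img.
  by rewrite /L; apply: eq_bigr => i _; rewrite Hp.
move=> hk; case: k hk => [//|k'] _.
split => [[psi Hpsi] | [rho Hrho]].
  exists (fun j => if j is j'.+1 then psi j' else 0).
  apply: (proj2 (char2 _ _ _ _)); exact: (proj1 (char1 _ _ _ _) Hpsi).
exists (fun j => rho j.+1).
apply: (proj2 (char1 _ _ _ _)); exact: (proj1 (char2 _ _ _ _) Hrho).
Qed.
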